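(* Let $q\in\mathrm{prob}(\{0,1\}^2)$. The set $E:=\{(\pi_1,\chi^{(2)}_{1|1}):(\pi,\chi)\in\Theta_2,\ \mu(\pi,\chi)=q\}$ is nonempty and equals the set of all $(\mathrm{Pr},\mathrm{Se}_2)\in[0,1]^2$ satisfying $\mathrm{Pr}-q_{+0}\le\mathrm{Pr}\,\mathrm{Se}_2\le q_{+1}$.
   Context: A subscript $+$ denotes summation over the replaced index: $q_{+0}=q_{00}+q_{10}$, $q_{+1}=q_{01}+q_{11}$. $\mathrm{prob}(\mathcal{X})$ is the set of probability densities on a finite set $\mathcal{X}$; $\mathrm{markov}(\mathcal{X},\mathcal{Y})$ the set of maps $(x,y)\mapsto p_{y|x}$ with $p_{\cdot|x}\in\mathrm{prob}(\mathcal{Y})$. $\Theta_2:=\mathrm{prob}(\{0,1\})\times\mathrm{markov}(\{0,1\},\{0,1\}^2)$, $\mu(\pi,\chi)_j:=\sum_{i=0}^1\pi_i\chi_{j|i}$ for $j\in\{0,1\}^2$, $\chi^{(2)}_{\iota|i}:=\chi_{0\iota|i}+\chi_{1\iota|i}$. *)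

(* Defs.v *)
(* Indices {0,1} are encoded as bool (0 = false, 1 = true);
   {0,1}^2 as bool * bool, where the pair (a, b) encodes the string "ab". *)
From mathcomp Require Import all_boot all_order all_algebra.
Set Implicit Arguments. Unset Strict Implicit. Unset Printing Implicit Defensive.
Import Order.TTheory GRing.Theory Num.Theory.
Local Open Scope ring_scope.

Section Defs.
Variable R : realFieldType.

Definition is_prob (X : finType) (p : X -> R) : Prop :=
  (forall x, 0 <= p x) /\ \sum_(x : X) p x = 1.

Definition is_markov (X Y : finType) (k : X -> Y -> R) : Prop :=
  forall x, is_prob (k x).

Definition in_Theta2 (pi : bool -> R) (chi : bool -> bool * bool -> R) : Prop :=
  is_prob pi /\ is_markov chi.

Definition mu (pi : bool -> R) (chi : bool -> bool * bool -> R)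
  (j : bool * bool) : R := \sum_(i : bool) pi i * chi i j.

Definition chi2 (chi : bool -> bool * bool -> R) (iota i : bool) : R :=
  chi i (false, iota) + chi i (true, iota).

Definition qplus (q : bool * bool -> R) (b : bool) : R :=
  q (false, b) + q (true, b).

Definition E_set (q : bool * bool -> R) (x : R * R) : Prop :=
  exists pi chi, in_Theta2 pi chi /\ (forall j, mu pi chi j = q j) /\
    x = (pi true, chi2 chi true true).
End Defs.

(* Main.v *)
Require Import Defs.
From mathcomp Require Import all_boot all_order all_algebra.
From mathcomp Require Import lra.
Import Order.TTheory GRing.Theory Num.Theory.
Local Open Scope ring_scope.

Lemma sum4 (R : realFieldType) (f : bool * bool -> R) :
  \sum_(x : bool * bool) f x = f (true,true) + f (true,false) + (f (false,true) + f (false,false)).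
Proof. rewrite (eq_bigr (fun x => f (x.1, x.2))); last by case.
rewrite -(pair_bigA _ (fun a b => f (a,b))) /= !big_bool /=. by rewrite addrA. Qed.

Lemma sum2 (R : realFieldType) (f : bool -> R) :
  \sum_(x : bool) f x = f true + f false.
Proof. by rewrite big_bool. Qed.

Lemma nec (R : realFieldType) (q : bool * bool -> R) Pr Se2 :
  E_set q (Pr, Se2) ->
  [/\ 0 <= Pr <= 1, 0 <= Se2 <= 1,
      Pr - qplus q false <= Pr * Se2 & Pr * Se2 <= qplus q true].
Proof.
case=> pi [chi [[[p0 p1] hchi] [hmu [-> ->]]]].
move: p1; rewrite sum2 => p1.
have [c0 s0] := hchi false; have [c1 s1] := hchi true.
move: s0 s1; rewrite !sum4 => s0 s1.
have m := hmu; rewrite /mu in m.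
have m1 := m (true,true); have m2 := m (true,false);
have m3 := m (false,true); have m4 := m (false,false).
rewrite !sum2 in m1 m2 m3 m4.
rewrite /qplus /chi2 -m1 -m2 -m3 -m4.
have := p0 true; have := p0 false.
have := c0 (true,true); have := c0 (true,false);
have := c0 (false,true); have := c0 (false,false).
have := c1 (true,true); have := c1 (true,false);
have := c1 (false,true); have := c1 (false,false).
move=> *.
split; [apply/andP; split; lra | apply/andP; split; lra | nra | nra].
Qed.

Lemma suf (R : realFieldType) (q : bool * bool -> R) Pr Se2 :
  is_prob q ->
  [/\ 0 <= Pr <= 1, 0 <= Se2 <= 1,
      Pr - qplus q false <= Pr * Se2 & Pr * Se2 <= qplus q true] ->
  E_set q (Pr, Se2).
Proof.
move=> [q0 qs] [/andP [P0 P1] /andP [S0 S1] h0 h1].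
move: qs; rewrite sum4 => qs.
have qTT := q0 (true,true); have qTF := q0 (true,false);
have qFT := q0 (false,true); have qFF := q0 (false,false).
rewrite /qplus in h0 h1.
have [->|Pn0] := eqVneq Pr 0.
  exists (fun i => if i then 0 else 1),
    (fun i j => if i then (if j.1 then 0 else if j.2 then Se2 else 1 - Se2) else q j).
  split; last split.
  - split.
      by split; [case=> //; lra | rewrite sum2; lra].
    case; split; try rewrite sum4 /=; try lra; try by [].
    case=> [[] []] /=; lra.
  - move=> j; rewrite /mu sum2 /=; lra.
  - by rewrite /chi2 /=; congr pair; lra.
have Ppos : 0 < Pr by rewrite lt_neqAle eq_sym Pn0.
pose s := fun b : bool => if b then Se2 else 1 - Se2.
pose t := fun b : bool => s b / qplus q b.
pose c1 := fun j : bool * bool => q j * t j.2.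
have tge0 : forall b, 0 <= t b.
  move=> b; rewrite /t /s /qplus; apply: divr_ge0; case: b; lra.
have C : forall b, qplus q b * t b = s b.
  move=> b; rewrite /t.
  have [e|ne] := eqVneq (qplus q b) 0.
    rewrite e mul0r; move: e; rewrite /qplus /s; case: b => e; nra.
  by rewrite mulrC divfK.
have B : forall j, Pr * c1 j <= q j.
  move=> [a b]; rewrite /c1 /=.
  have : Pr * t b <= 1.
    rewrite /t.
    have [e|ne] := eqVneq (qplus q b) 0.
      by rewrite e invr0 mulr0 mulr0 ler01.
    have qp : 0 < qplus q b.
      rewrite lt_neqAle eq_sym ne /= /qplus; case: b {ne}; lra.
    rewrite mulrA ler_pdivrMr // mul1r /s /qplus; case: b {qp ne}; lra.
  have := q0 (a,b); have := tge0 b; nra.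
have A : forall j, 0 <= c1 j by move=> j; rewrite /c1; apply: mulr_ge0.
have Cs : forall b, c1 (false,b) + c1 (true,b) = s b.
  by move=> b; rewrite -C /c1 /qplus /= mulrDl.
have sum1 : \sum_j c1 j = 1.
  rewrite sum4; have := Cs true; have := Cs false; rewrite /s /=; lra.
have [e1|Pn1] := eqVneq Pr 1.
  rewrite e1 in h0 h1 B *.
  have Se : Se2 = q (false,true) + q (true,true) by lra.
  have c1q : forall j, c1 j = q j.
    have : forall b, c1 (false,b) <= q (false,b) /\ c1 (true,b) <= q (true,b).
      move=> b; have := B (false,b); have := B (true,b); rewrite !mul1r; done.
    move=> H [a b]; have := Cs b; have [Ha Hb] := H b.
    rewrite /s Se; case: a; case: b => /= in Ha Hb *; lra.
  exists (fun i => if i then 1 else 0), (fun i j => if i then c1 j else q j).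
  split; last split.
  - split; first by split; [case=> //; lra | rewrite sum2; lra].
    case; split => //; rewrite sum4; lra.
  - move=> j; rewrite /mu sum2 /= c1q; lra.
  - congr pair; rewrite /chi2 /= !c1q; lra.
have Plt : 0 < 1 - Pr by rewrite subr_gt0 lt_neqAle Pn1.
exists (fun i => if i then Pr else 1 - Pr),
  (fun i j => if i then c1 j else (q j - Pr * c1 j) / (1 - Pr)).
split; last split.
- split; first by split; [case=> /=; lra | rewrite sum2; lra].
  case; split => //.
  + move=> j; apply: divr_ge0; last lra. by have := B j; lra.
  + rewrite -mulr_suml; apply: (@mulIf _ (1 - Pr)); first by rewrite subr_eq0 eq_sym.
    rewrite mul1r divfK; last by rewrite subr_eq0 eq_sym.
    rewrite sumrB -mulr_sumr sum1 sum4 in qs *; lra.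
- move=> j; rewrite /mu sum2 /=.
  rewrite [X in _ + X]mulrC divfK; last by rewrite subr_eq0 eq_sym. lra.
- by congr pair; rewrite /chi2 /= Cs.
Qed.

Theorem lemma7 (R : realFieldType) (q : bool * bool -> R) :
  is_prob q ->
  (exists x : R * R, E_set q x) /\
  (forall Pr Se2 : R,
     E_set q (Pr, Se2) <->
     [/\ 0 <= Pr <= 1, 0 <= Se2 <= 1,
         Pr - qplus q false <= Pr * Se2 & Pr * Se2 <= qplus q true]).
Proof.
move=> hq; split.
  exists (0, 0); apply: suf => //.
  have [q0 _] := hq; rewrite /qplus mul0r sub0r.
  have := q0 (true,true); have := q0 (true,false);
  have := q0 (false,true); have := q0 (false,false).
  move=> *; split; [apply/andP; split; lra| apply/andP; split; lra | lra | lra].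
move=> Pr Se2; split; [exact: nec | exact: suf].
Qed.
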